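(* Let $\alpha\in\mathbb{R}$, $\gamma>0$, and let $\mu$ be a positive Borel measure on $[0,1)$ with moments $\mu_n=\int_{[0,1)}t^n\,d\mu(t)$. Suppose there is $\varepsilon>0$ such that $\mu_n=\mathcal{O}\big(n^{-(\frac{\alpha}{2}+\varepsilon)}\big)$ as $n\to\infty$. Then the generalized Hilbert operator $\mathcal{H}_{\mu,\gamma}$ is well defined on $\mathcal{D}_\alpha$, i.e. for every $f(z)=\sum_{k=0}^\infty a_kz^k\in\mathcal{D}_\alpha$ and every $n\ge 0$ the series $\sum_{k=0}^{\infty}\mu_{n+k}a_k$ converges.
   Context: $\mathbb{D}$ is the open unit disc. For $\alpha\in\mathbb{R}$, the Dirichlet-type space $\mathcal{D}_\alpha$ consists of analytic $f(z)=\sum_{n\ge0}a_nz^n$ on $\mathbb{D}$ with $\|f\|_{\mathcal{D}_\alpha}^2=\sum_{n=0}^\infty (n+1)^{1-\alpha}|a_n|^2<\infty$. For a positive Borel measure $\mu$ on $[0,1)$ and $\gamma>0$, the generalized Hilbert operator is defined on analytic $f(z)=\sum_k a_kz^k$ by $\mathcal{H}_{\mu,\gamma}(f)(z)=\sum_{n=0}^\infty\Big(\sum_{k=0}^\infty \mu_{n+k}a_k\Big)\frac{\Gamma(n+\gamma)}{n!\,\Gamma(\gamma)}z^n$, where $\mu_j=\int_{[0,1)}t^j\,d\mu(t)$. *)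

(* Defs.v *)
From HB Require Import structures.
From mathcomp Require Import all_boot all_order all_algebra.
From mathcomp Require Import all_classical all_reals all_analysis.
From mathcomp Require Import complex.
Set Implicit Arguments. Unset Strict Implicit. Unset Printing Implicit Defensive.
Import Order.TTheory GRing.Theory Num.Theory.
Import numFieldNormedType.Exports.
Local Open Scope classical_set_scope.
Local Open Scope ring_scope.

(* n-th moment  mu_n = \int_{[0,1)} t^n dmu(t)  (real-valued; finite under the
   hypothesis mu [0,1) < +oo used in the theorem). *)
Definition moment (R : realType) (mu : {measure set (measurableTypeR R) -> \bar R})
  (n : nat) : R :=
  fine (\int[mu]_(t in `[0%R, 1%R[) ((t ^+ n)%:E))%E.

(* The complex numbers over R, viewed as a numFieldType so that it carries its
   canonical (modulus) normed/topological structure from MathComp-Analysis. *)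
Definition Cplx (R : realType) : numFieldType := R[i].

Definition csqnorm (R : realType) (z : R[i]) : R := (Normc.normc z) ^+ 2.

(* f(z) = sum a_n z^n belongs to D_alpha:
   sum_n (n+1)^(1-alpha) |a_n|^2 < oo  (series of nonnegative reals converges) *)
Definition in_Dalpha (R : realType) (alpha : R) (a : nat -> Cplx R) : Prop :=
  cvgn (series (fun n : nat => (n.+1%:R `^ (1 - alpha)) * csqnorm (a n))).

(* Main.v *)
Require Import Defs.
From HB Require Import structures.
From mathcomp Require Import all_boot all_order all_algebra.
From mathcomp Require Import all_classical all_reals all_analysis.
From mathcomp Require Import complex ring lra zify.
Import Order.TTheory GRing.Theory Num.Theory.
Import numFieldNormedType.Exports.
Local Open Scope classical_set_scope.
Local Open Scope ring_scope.
Lemma tail_cmp (R : realType) (K : nat) (u v : R ^nat) :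
  (forall k, 0 <= u k) -> (forall k, (K <= k)%N -> u k <= v k) ->
  cvgn (series v) -> cvgn (series u).
Proof.
move=> u0 uv cv.
pose u' := fun k => if (K <= k)%N then u k else 0.
pose v' := fun k => if (K <= k)%N then v k else 0.
have E : forall w : R ^nat, forall n,
  \sum_(K <= k < n) (fun k => if (K <= k)%N then w k else 0) k = \sum_(K <= k < n) w k.
  move=> w n; apply: eq_big_nat => k /andP[Kk _]; by rewrite Kk.
have cv' : cvgn (series v').
  rewrite -(is_cvg_series_restrict K).
  have -> : (fun n => \sum_(K <= k < n) v' k) = (fun n => \sum_(K <= k < n) v k).
    by apply: funext => n; exact: E.
  by rewrite is_cvg_series_restrict.
have cu' : cvgn (series u').
  apply: (series_le_cvg _ _ _ cv').
  - by move=> k; rewrite /u'; case: ifP.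
  - by move=> k; rewrite /v'; case: ifP => // Kk; apply: le_trans (uv _ Kk).
  - by move=> k; rewrite /u' /v'; case: ifP => // Kk; apply: uv.
rewrite -(is_cvg_series_restrict K).
have <- : (fun n => \sum_(K <= k < n) u' k) = (fun n => \sum_(K <= k < n) u k).
  by apply: funext => n; exact: E.
by rewrite is_cvg_series_restrict.
Qed.
Lemma key_ineq (R : realType) (d x : R) : 0 < d -> 1 <= x ->
  d * (x + 1) `^ (-1 - d) <= x `^ (- d) - (x + 1) `^ (- d).
Proof.
move=> d0 x1.
have x0 : 0 < x by lra.
have x10 : 0 < x + 1 by lra.
set y := x / (x + 1).
have y0 : 0 < y by rewrite divr_gt0.
have xE : x = (x + 1) * y by rewrite /y mulrC divfK // gt_eqF.
have -> : x `^ (-d) = (x + 1) `^ (-d) * y `^ (-d).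
  by rewrite {1}xE powRM // ltW.
have -> : (x + 1) `^ (-1 - d) = (x + 1) `^ (-d) * (x + 1)^-1.
  rewrite [-1 - d]addrC powRD; last by rewrite (gt_eqF x10) implybT.
  by rewrite powR_inv1 ?ltW // mulrC.
have P : 0 < (x + 1) `^ (-d) by rewrite powR_gt0.
have Hy : 1 + d * (x + 1)^-1 <= y `^ (- d).
  rewrite /powR gt_eqF //.
  apply: le_trans (expR_ge1Dx _).
  rewrite lerD2l mulNr -mulrN; apply: ler_wpM2l; first exact: ltW.
  have -> : (x + 1)^-1 = 1 - y.
    by rewrite /y; field; rewrite gt_eqF.
  have := le_ln1Dx (x := y - 1).
  have -> : 1 + (y - 1) = y by ring.
  move=> H; have : ln y <= y - 1 by apply: H; lra.
  lra.
have : (x + 1) `^ (- d) * (1 + d * (x + 1)^-1) <= (x + 1) `^ (- d) * y `^ (- d).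
  by rewrite ler_wpM2l // ltW.
lra.
Qed.

Lemma pseries_cvg (R : realType) (d : R) : 0 < d ->
  cvgn (series (fun k : nat => (k.+1%:R : R) `^ (-1 - d))).
Proof.
move=> d0.
set u := fun k : nat => _.
have u0 : forall k, 0 <= u k by move=> k; exact: powR_ge0.
apply: nondecreasing_is_cvgn.
  by apply: (nondecreasing_series (P := xpredT) (m := 0%N)) => k _ _; exact: u0.
exists (1 + d^-1) => _ [m _ <-].
have di : 0 < d^-1 by rewrite invr_gt0.
case: m => [|m]; first by rewrite /series /= big_geq //; lra.
rewrite /series /= big_nat_recl // /u powR1.
rewrite lerD2l.
pose h := fun k : nat => (k.+1%:R : R) `^ (- d).
have hb : forall k : nat, (k.+2%:R : R) `^ (-1 - d) <= (h k - h k.+1) / d.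
  move=> k; rewrite ler_pdivlMr // mulrC /h -(@natr1 R k.+1) -(@natr1 R k).
  by apply: key_ineq => //; rewrite lerDr ler0n.
apply: le_trans; first by apply: ler_sum_nat => k _; exact: hb.
rewrite -mulr_suml.
have -> : \sum_(0 <= i < m) (h i - h i.+1) = - \sum_(0 <= i < m) (h i.+1 - h i).
  by rewrite -sumrN; apply: eq_bigr => i _; rewrite opprB.
rewrite telescope_sumr // /h powR1.
have : 0 <= (m.+1%:R : R) `^ (- d) by exact: powR_ge0.
move=> hm.
rewrite opprB -[X in _ <= X]mul1r ler_wpM2r ?ltW //; lra.
Qed.

Lemma cmp_pow (R : realType) (p : R) (n k : nat) : (1 <= k)%N ->
  ((n + k)%:R : R) `^ p <=
    ((n.+1%:R : R) `^ p + (2^-1 : R) `^ p) * (k.+1%:R : R) `^ p.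
Proof.
move=> k1.
have y0 : 0 < (k.+1%:R : R) by rewrite ltr0n.
set r := ((n + k)%:R : R) / k.+1%:R.
have r0 : 0 <= r by rewrite divr_ge0.
have -> : ((n + k)%:R : R) = r * k.+1%:R by rewrite /r divfK // gt_eqF.
rewrite powRM ?ler0n //.
rewrite ler_pM2r ?powR_gt0 //.
have hA : 0 <= (n.+1%:R : R) `^ p by exact: powR_ge0.
have hB : 0 <= (2^-1 : R) `^ p by exact: powR_ge0.
have [p0|p0] := leP 0 p.
  suff : r `^ p <= (n.+1%:R : R) `^ p by lra.
  apply: ge0_ler_powR => //; rewrite ?nnegrE ?ler0n //.
  rewrite /r ler_pdivrMr // -natrM ler_nat; lia.
suff : r `^ p <= (2^-1 : R) `^ p by lra.
have e1 : r `^ p = (r `^ (-p))^-1 by rewrite -powRN opprK.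
have e2 : (2^-1 : R) `^ p = ((2^-1 : R) `^ (-p))^-1 by rewrite -powRN opprK.
rewrite e1 e2.
have h2 : 0 < (2^-1 : R) `^ (- p) by rewrite powR_gt0 // invr_gt0.
rewrite lef_pV2 ?posrE //; last first.
  rewrite powR_gt0 // /r divr_gt0 // ltr0n; lia.
apply: ge0_ler_powR; rewrite ?nnegrE ?invr_ge0 ?ler0n //; first lra.
rewrite /r ler_pdivlMr // mulrC -[X in _ <= X]mulr1.
have -> : (k.+1%:R : R) * 2^-1 = k.+1%:R / 2 by [].
rewrite mulr1 ler_pdivrMr // -natrM ler_nat; lia.
Qed.
Lemma sqrt_le_add (R : realType) (x y : R) : Num.sqrt (x ^+ 2 + y ^+ 2) <= `|x| + `|y|.
Proof.
have h : 0 <= `|x| + `|y| by rewrite addr_ge0.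
rewrite -(ger0_norm h) -sqrtr_sqr.
apply: ler_wsqrtr.
have hx : `|x| ^+ 2 = x ^+ 2 := real_normK (num_real x).
have hy : `|y| ^+ 2 = y ^+ 2 := real_normK (num_real y).
rewrite sqrrD hx hy.
have : 0 <= `|x| * `|y| by rewrite mulr_ge0.
lra.
Qed.

Lemma cplx_cvg (R : realType) (s : nat -> Cplx R) :
  cvgn (fun n => complex.Re (s n : R[i])) ->
  cvgn (fun n => complex.Im (s n : R[i])) -> cvgn s.
Proof.
move=> /cvg_ex[/= xr Hr] /cvg_ex[/= xi Hi].
apply: (cvgP ((xr +i* xi)%C : Cplx R)).
apply/cvgrPdist_lt => e e0.
have : (complex.Im (e : R[i]) == 0) && (0 < complex.Re (e : R[i])).
  by move: e0; rewrite ltcE /= eq_sym.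
move=> /andP[/eqP ei er].
have er2 : 0 < complex.Re (e : R[i]) / 2 by lra.
move/cvgrPdist_lt : Hr => /(_ _ er2) Hr.
move/cvgrPdist_lt : Hi => /(_ _ er2) Hi.
apply: filterS2 Hr Hi => m h1 h2.
have -> : e = ((complex.Re (e : R[i]))%:C)%C :> Cplx R.
  by move: (e) ei => [? ?] /= ->.
rewrite normc_def ltcR.
move: (s m) h1 h2 => [sr si] /= h1 h2.
have := sqrt_le_add _ (xr - sr) (xi - si). lra.
Qed.

Lemma Re_series (R : realType) (z : nat -> Cplx R) n :
  complex.Re (series z n : R[i]) = series (fun k => complex.Re (z k : R[i])) n.
Proof.
elim: n => [|n IH]; first by rewrite /series /= !big_geq.
rewrite !seriesSr -IH.
by case: (series z n) => ? ?; case: (z n).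
Qed.

Lemma Im_series (R : realType) (z : nat -> Cplx R) n :
  complex.Im (series z n : R[i]) = series (fun k => complex.Im (z k : R[i])) n.
Proof.
elim: n => [|n IH]; first by rewrite /series /= !big_geq.
rewrite !seriesSr -IH.
by case: (series z n) => ? ?; case: (z n).
Qed.

Lemma abs_cvg (R : realType) (f u : R ^nat) :
  (forall k, `|f k| <= u k) -> cvgn (series u) -> cvgn (series f).
Proof.
move=> fu cu.
have cuu : cvgn (series (fun k => u k + u k)) by exact: is_cvg_seriesD.
have ch : cvgn (series (fun k => `|f k|)).
  apply: (series_le_cvg _ _ fu cu) => k //.
  exact: le_trans (normr_ge0 _) (fu k).
have cg : cvgn (series (fun k => `|f k| + f k)).
  apply: (series_le_cvg _ _ _ cuu) => k /=;
  have := fu k; have := ler_norm (f k); have := ler_norm (- f k);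
  rewrite normrN; have := normr_ge0 (f k); lra.
have -> : f = (fun k => `|f k| + f k) - (fun k => `|f k|).
  by apply: funext => k; rewrite !fctE addrC addKr.
exact: is_cvg_seriesB.
Qed.

Lemma cplx_series_cvg (R : realType) (z : nat -> Cplx R) :
  cvgn (series (fun k => complex.Re (z k : R[i]))) ->
  cvgn (series (fun k => complex.Im (z k : R[i]))) -> cvgn (series z).
Proof.
move=> h1 h2; apply: cplx_cvg.
  have -> : (fun m => complex.Re (series z m : R[i])) =
    series (fun k => complex.Re (z k : R[i])) by apply: funext => m; exact: Re_series.
  exact: h1.
have -> : (fun m => complex.Im (series z m : R[i])) =
  series (fun k => complex.Im (z k : R[i])) by apply: funext => m; exact: Im_series.
exact: h2.
Qed.

Theorem lemma2p1 (R : realType) (alpha gamma : R)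
  (mu : {measure set (measurableTypeR R) -> \bar R}) :
  0 < gamma ->
  (mu [set` `[0%R, 1%R[] < +oo)%E ->
  (exists eps : R, 0 < eps /\
     exists (C : R) (N : nat), forall n : nat, (N <= n)%N ->
       `|moment mu n| <= C * (n%:R `^ (- (alpha / 2 + eps)))) ->
  forall a : nat -> Cplx R, in_Dalpha alpha a ->
  forall n : nat,
    cvgn (series (fun k : nat => ((moment mu (n + k))%:C)%C * a k :> Cplx R)).
Proof.
move=> _ _ [E [E0 [C [N HC]]]] a Da n.
pose b := fun k => moment mu (n + k).
pose c := fun k => Normc.normc (a k : R[i]).
have c0 : forall k, 0 <= c k by move=> k; rewrite /c; case: (a k) => ? ?; exact: sqrtr_ge0.
have cE : forall k, csqnorm (a k : R[i]) = c k ^+ 2 by [].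
pose p := - (alpha / 2 + E).
pose K0 := (n.+1%:R : R) `^ p + (2^-1 : R) `^ p.
pose D := (`|C| * K0) ^+ 2.
pose u := fun k => `|b k| * c k.
pose f := fun k : nat => (k.+1%:R : R) `^ (1 - alpha) * csqnorm (a k : R[i]).
pose g := fun k : nat => (k.+1%:R : R) `^ (-1 - (E *+ 2)).
pose v := fun k => 2^-1 * f k + (D / 2) * g k.
have cv : cvgn (series v).
  have -> : v = (2^-1 : R) *: f + (D / 2) *: g by [].
  apply: is_cvg_seriesD; apply: is_cvg_seriesZ; first exact: Da.
  by apply: pseries_cvg; rewrite mulrn_wgt0.
have cu : cvgn (series u).
  apply: (tail_cmp _ (maxn N 1) u v) cv.
    by move=> k; rewrite /u mulr_ge0.
  move=> k; rewrite geq_max => /andP[Nk k1].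
  have kN : (N <= n + k)%N by apply: leq_trans Nk (leq_addl _ _).
  set y := (k.+1%:R : R).
  have y0 : 0 < y by rewrite ltr0n.
  set Y := y `^ p.
  have Y0 : 0 <= Y by exact: powR_ge0.
  set B := `|b k|.
  set M := `|C| * K0 * Y.
  have hB : B <= M.
    apply: le_trans (HC _ kN) _.
    set X := ((n + k)%:R : R) `^ _.
    have X0 : 0 <= X by exact: powR_ge0.
    have h1 : C * X <= `|C| * X by rewrite ler_wpM2r // ler_norm.
    have h2 : `|C| * X <= `|C| * (K0 * Y) by rewrite ler_wpM2l // cmp_pow.
    by rewrite /M -mulrA; apply: le_trans h1 h2.
  have B0 : 0 <= B by exact: normr_ge0.
  set w := y `^ (1 - alpha).
  have w0 : 0 < w by exact: powR_gt0.
  have gE : g k = Y * Y * w^-1.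
    rewrite /g /Y /w -powRN -!powRD; last 2 first.
      by rewrite (gt_eqF y0) implybT.
      by rewrite (gt_eqF y0) implybT.
    congr (_ `^ _); rewrite /p; lra.
  have fE : f k = w * c k ^+ 2 by rewrite /f cE.
  rewrite /v /u fE gE -/B.
  have DE : D / 2 * (Y * Y * w^-1) = 2^-1 * (M ^+ 2 * w^-1).
    by rewrite /D /M; field; rewrite gt_eqF.
  rewrite DE.
  have BM : B ^+ 2 <= M ^+ 2 by rewrite ler_pXn2r // ?nnegrE //; apply: le_trans hB.
  have iw0 : 0 < w^-1 by rewrite invr_gt0.
  have BMw : B ^+ 2 * w^-1 <= M ^+ 2 * w^-1 by rewrite ler_pM2r.
  have sq : 0 <= (w * c k - B) ^+ 2 * w^-1 by rewrite mulr_ge0 ?sqr_ge0 // ltW.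
  have sqE : (w * c k - B) ^+ 2 * w^-1 = w * c k ^+ 2 - 2 * (B * c k) + B ^+ 2 * w^-1.
    by field; rewrite gt_eqF.
  lra.
have Hre : forall k, `|complex.Re ((((moment mu (n + k))%:C)%C * a k :> Cplx R) : R[i])| <= u k.
  move=> k; rewrite /u /c /b; case: (a k) => x y /=.
  rewrite mul0r subr0 normrM ler_wpM2l //.
  rewrite -sqrtr_sqr; apply: ler_wsqrtr; rewrite lerDl; exact: sqr_ge0.
have Him : forall k, `|complex.Im ((((moment mu (n + k))%:C)%C * a k :> Cplx R) : R[i])| <= u k.
  move=> k; rewrite /u /c /b; case: (a k) => x y /=.
  rewrite mul0r addr0 normrM ler_wpM2l //.
  rewrite -sqrtr_sqr; apply: ler_wsqrtr; rewrite lerDr; exact: sqr_ge0.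
apply: cplx_series_cvg.
    by apply: (abs_cvg _ _ u) cu => k; apply: Hre.
by apply: (abs_cvg _ _ u) cu => k; apply: Him.
Qed.
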